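(* For every formula with placeholders $\varphi$ and every formula $\psi$: $\varphi[\mathbf{GF}\psi] \equiv (\mathbf{GF}\psi \wedge \varphi[\mathbf{true}]) \vee \varphi[\mathbf{false}]$ and $\varphi[\mathbf{FG}\psi] \equiv (\mathbf{FG}\psi \wedge \varphi[\mathbf{true}]) \vee \varphi[\mathbf{false}]$.
   Context: Fix a finite set $Ap$ of atomic propositions. A word is an infinite sequence $w = w[0]w[1]\dots$ of letters of $2^{Ap}$, and $w_i$ denotes the suffix $w[i]w[i+1]\dots$. Formulas are generated by $\varphi ::= \mathbf{true} \mid \mathbf{false} \mid a \mid \neg a \mid \varphi\wedge\varphi \mid \varphi\vee\varphi \mid \mathbf{X}\varphi \mid \varphi\,\mathbf{U}\,\varphi \mid \varphi\,\mathbf{W}\,\varphi \mid \mathbf{GF}\varphi \mid \mathbf{FG}\varphi$ ($a\in Ap$), where $\mathbf{GF}$, $\mathbf{FG}$ are single unary operators. Semantics: $w\models a$ iff $a\in w[0]$, $w\models\neg a$ iff $a\notin w[0]$, Boolean constants and connectives as usual; $w\models\mathbf{X}\varphi$ iff $w_1\models\varphi$; $w\models\varphi\mathbf{U}\psi$ iff $\exists k$: $w_k\models\psi$ and $\forall j<k$: $w_j\models\varphi$; $w\models\varphi\mathbf{W}\psi$ iff ($\forall k$: $w_k\models\varphi$) or $w\models\varphi\mathbf{U}\psi$; $w\models\mathbf{GF}\varphi$ iff $w_k\models\varphi$ for infinitely many $k$; $w\models\mathbf{FG}\varphi$ iff $\exists n\,\forall k\geq n$: $w_k\models\varphi$. $\varphi\equiv\psi$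 means both formulas are satisfied by exactly the same words. A formula with placeholders is a formula over $Ap\cup\{\star\}$, where $\star$ is a special fresh atomic proposition, with at least one occurrence of $\star$ and no occurrence of $\neg\star$; for such $\varphi$ and a formula $\psi$, $\varphi[\psi]$ denotes the result of substituting $\psi$ for every occurrence of $\star$. *)

(* Defs.v *)
From mathcomp Require Import all_boot.
Set Implicit Arguments. Unset Strict Implicit. Unset Printing Implicit Defensive.

(* LTL formulas in negation normal form over atomic propositions of type A. *)
Inductive formula (A : Type) : Type :=
| FTrue | FFalse
| FAtom of A
| FNAtom of A
| FAnd of formula A & formula A
| FOr of formula A & formula A
| FX of formula A
| FU of formula A & formula A
| FW of formula A & formula A
| FGF of formula A
| FFG of formula A.

Arguments FTrue {A}. Arguments FFalse {A}.

(* A word over 2^A: w i is the set of atoms true at position i. *)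
Definition word (A : finType) := nat -> {set A}.

Definition suffix (A : finType) (w : word A) (i : nat) : word A := fun k => w (i + k).

Fixpoint sat (A : finType) (w : word A) (f : formula A) {struct f} : Prop :=
  match f with
  | FTrue => True
  | FFalse => False
  | FAtom a => a \in w 0
  | FNAtom a => a \notin w 0
  | FAnd f1 f2 => sat w f1 /\ sat w f2
  | FOr f1 f2 => sat w f1 \/ sat w f2
  | FX f1 => sat (suffix w 1) f1
  | FU f1 f2 => exists k, sat (suffix w k) f2 /\ forall j, j < k -> sat (suffix w j) f1
  | FW f1 f2 => (forall k, sat (suffix w k) f1) \/
                (exists k, sat (suffix w k) f2 /\ forall j, j < k -> sat (suffix w j) f1)
  | FGF f1 => forall n, exists k, n <= k /\ sat (suffix w k) f1
  | FFG f1 => exists n, forall k, n <= k -> sat (suffix w k) f1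
  end.

Definition fequiv (A : finType) (f g : formula A) : Prop :=
  forall w : word A, sat w f <-> sat w g.

(* Formulas with placeholders: formulas over option A, where None is the
   fresh atom star. *)
Fixpoint star_occurs (A : Type) (f : formula (option A)) : bool :=
  match f with
  | FTrue | FFalse => false
  | FAtom a => if a is None then true else false
  | FNAtom _ => false
  | FAnd f1 f2 | FOr f1 f2 | FU f1 f2 | FW f1 f2 => star_occurs f1 || star_occurs f2
  | FX f1 | FGF f1 | FFG f1 => star_occurs f1
  end.

Fixpoint no_neg_star (A : Type) (f : formula (option A)) : bool :=
  match f with
  | FTrue | FFalse | FAtom _ => true
  | FNAtom a => if a is None then false else true
  | FAnd f1 f2 | FOr f1 f2 | FU f1 f2 | FW f1 f2 => no_neg_star f1 && no_neg_star f2
  | FX f1 | FGF f1 | FFG f1 => no_neg_star f1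
  end.

Definition placeholder_formula (A : Type) (f : formula (option A)) : Prop :=
  star_occurs f /\ no_neg_star f.

(* phi[psi]: replace each star by psi.  A (non-star) negated star cannot occur
   in a placeholder formula; the FNAtom None case is mapped to FTrue arbitrarily. *)
Fixpoint subst (A : Type) (f : formula (option A)) (psi : formula A) : formula A :=
  match f with
  | FTrue => FTrue
  | FFalse => FFalse
  | FAtom (Some a) => FAtom a
  | FAtom None => psi
  | FNAtom (Some a) => FNAtom a
  | FNAtom None => FTrue
  | FAnd f1 f2 => FAnd (subst f1 psi) (subst f2 psi)
  | FOr f1 f2 => FOr (subst f1 psi) (subst f2 psi)
  | FX f1 => FX (subst f1 psi)
  | FU f1 f2 => FU (subst f1 psi) (subst f2 psi)
  | FW f1 f2 => FW (subst f1 psi) (subst f2 psi)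
  | FGF f1 => FGF (subst f1 psi)
  | FFG f1 => FFG (subst f1 psi)
  end.

(* Main.v *)
From Stdlib Require Import FunctionalExtensionality Classical_Prop.
Require Import Defs.
From mathcomp Require Import all_boot.
Local Notation suffix := Defs.suffix.

Lemma suffix_suffix (A : finType) (w : word A) i j :
  suffix (suffix w i) j = suffix w (i + j).
Proof. apply: functional_extensionality => k; by rewrite /suffix addnA. Qed.

Lemma suffix0 (A : finType) (w : word A) : suffix w 0 = w.
Proof. by apply: functional_extensionality => k. Qed.

Lemma hyp_suffix (A : finType) (p1 p2 : formula A) (w : word A) i :
  (forall k, sat (suffix w k) p1 -> sat (suffix w k) p2) ->
  (forall k, sat (suffix (suffix w i) k) p1 -> sat (suffix (suffix w i) k) p2).
Proof. move=> H k; rewrite suffix_suffix; exact: H. Qed.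

Arguments hyp_suffix {A p1 p2 w} i _ k.

Lemma mono (A : finType) (p1 p2 : formula A) (phi : formula (option A)) :
  no_neg_star phi -> forall w : word A,
  (forall k, sat (suffix w k) p1 -> sat (suffix w k) p2) ->
  sat w (subst phi p1) -> sat w (subst phi p2).
Proof.
elim: phi => //=.
- by case=> [a|] // _ w H; have := H 0; rewrite suffix0.
- move=> f1 IH1 f2 IH2 /andP[n1 n2] w H [h1 h2]; split;
    [exact: (IH1 n1 w H) | exact: (IH2 n2 w H)].
- move=> f1 IH1 f2 IH2 /andP[n1 n2] w H [h1|h2];
    [left; exact: (IH1 n1 w H) | right; exact: (IH2 n2 w H)].
- move=> f IH n w H h; exact: (IH n _ (hyp_suffix 1 H)).
- move=> f1 IH1 f2 IH2 /andP[n1 n2] w H [k [hk hj]]; exists k; split.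
    exact: (IH2 n2 _ (hyp_suffix k H)).
  move=> j jk; exact: (IH1 n1 _ (hyp_suffix j H) (hj j jk)).
- move=> f1 IH1 f2 IH2 /andP[n1 n2] w H [hall|[k [hk hj]]].
    left=> k; exact: (IH1 n1 _ (hyp_suffix k H) (hall k)).
  right; exists k; split.
    exact: (IH2 n2 _ (hyp_suffix k H)).
  move=> j jk; exact: (IH1 n1 _ (hyp_suffix j H) (hj j jk)).
- move=> f IH n w H h m; case: (h m) => k [mk hk]; exists k; split => //.
  exact: (IH n _ (hyp_suffix k H)).
- move=> f IH n w H [m h]; exists m => k mk.
  exact: (IH n _ (hyp_suffix k H) (h k mk)).
Qed.

Lemma GF_inv (A : finType) (psi : formula A) (w : word A) k :
  sat (suffix w k) (FGF psi) <-> sat w (FGF psi).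
Proof.
rewrite /=; split=> h n.
- case: (h n) => m [nm hm]; exists (k + m); split; last by rewrite -suffix_suffix.
  exact: leq_trans nm (leq_addl _ _).
- case: (h (k + n)) => m [nm hm]; exists (m - k); split.
    by rewrite leq_subRL ?(leq_trans (leq_addr _ _) nm) // addnC.
  rewrite suffix_suffix subnKC //; exact: leq_trans (leq_addr _ _) nm.
Qed.

Lemma FG_inv (A : finType) (psi : formula A) (w : word A) k :
  sat (suffix w k) (FFG psi) <-> sat w (FFG psi).
Proof.
rewrite /=; split=> [[n h]|[n h]].
- exists (k + n) => m km; have := h (m - k).
  rewrite suffix_suffix subnKC; last exact: leq_trans (leq_addr _ _) km.
  apply; by rewrite leq_subRL ?(leq_trans (leq_addr _ _) km) // addnC.
- exists n => m nm; rewrite suffix_suffix; apply: h.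
  exact: leq_trans nm (leq_addl _ _).
Qed.

Arguments mono {A p1 p2 phi}.

Lemma general (Ap : finType) (phi : formula (option Ap)) (P : formula Ap) :
  no_neg_star phi ->
  (forall (w : word Ap) k, sat (suffix w k) P <-> sat w P) ->
  fequiv (subst phi P) (FOr (FAnd P (subst phi FTrue)) (subst phi FFalse)).
Proof.
move=> nn inv w /=.
have mT : sat w (subst phi FFalse) -> sat w (subst phi FTrue).
  have H0 : forall k, sat (suffix w k) FFalse -> sat (suffix w k) FTrue by [].
  exact: (mono nn w H0).
have [b|nb] := (classic (sat w P)).
- have H1 : forall k, sat (suffix w k) P -> sat (suffix w k) FTrue by [].
  have H2 : forall k, sat (suffix w k) FTrue -> sat (suffix w k) P.
    move=> k _; exact/(inv w k).
  split.
  + move=> h; left; split => //; exact: (mono nn w H1 h).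
  + case=> [[_ h]|h]; first exact: (mono nn w H2 h).
    exact: (mono nn w H2 (mT h)).
- have H1 : forall k, sat (suffix w k) P -> sat (suffix w k) FFalse.
    move=> k /(inv w k); exact: nb.
  have H2 : forall k, sat (suffix w k) FFalse -> sat (suffix w k) P by [].
  split.
  + move=> h; right; exact: (mono nn w H1 h).
  + case=> [[h _]|h]; first by [].
    exact: (mono nn w H2 h).
Qed.

Theorem lemma2 (Ap : finType) (phi : formula (option Ap)) (psi : formula Ap) :
  placeholder_formula phi ->
  fequiv (subst phi (FGF psi)) (FOr (FAnd (FGF psi) (subst phi FTrue)) (subst phi FFalse)) /\
  fequiv (subst phi (FFG psi)) (FOr (FAnd (FFG psi) (subst phi FTrue)) (subst phi FFalse)).
Proof.
move=> [_ nn]; split; apply: general => // w k; [exact: GF_inv | exact: FG_inv].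
Qed.
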